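(* Let $n,m,p\in\mathbb{N}$ with $m\ge p$, $A\in\mathbb{R}^{n\times n}$, $B\in\mathbb{R}^{n\times m}$, $C\in\mathbb{R}^{p\times n}$, and let $f:\mathbb{R}\times\mathbb{R}^n\times\mathbb{R}^m\to\mathbb{R}^n$ be continuous and bounded. Assume: (P1) $L\in\mathcal{C}^\infty(\mathbb{R}\to\mathbb{R}^{m\times m})$ is such that $L,\dot L,\ldots,L^{(n)}$ are bounded and there is $q\in\mathbb{N}$ with $\operatorname{rk} BL(t)=q\ge p$ for all $t\in\mathbb{R}$; (P2) there is $r\in\mathbb{N}$ such that $CA^kBL(t)=0$ for all $t$ and $CA^kf(t,x,u)=0$ for all $(t,x,u)$, for $k=0,\ldots,r-2$, and $\Gamma:=CA^{r-1}B$ satisfies $\operatorname{rk}\Gamma L(t)=p$ for all $t\in\mathbb{R}$. Suppose moreover that $q=p$. Then, with $\mathcal{B}(t)$, $\mathcal{C}$, $\mathcal{N}(t)$ as in the context, $$\Big(I_n-\mathcal{B}(t)\big(\mathcal{C}\mathcal{B}(t)\big)^\dagger\mathcal{C}\Big)\mathcal{B}(t)=0\quad\text{for all }t\in\mathbb{R},$$ and consequently $\mathcal{N}(t)\mathcal{B}(t)=0$ for all $t\in\mathbb{R}$.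
   Context: $M^\dagger$ denotes the Moore–Penrose pseudoinverse. For a matrix function $M$, $(\tfrac{d}{dt}-A)(M(t)):=\dot M(t)-AM(t)$, applied iteratively for powers. Define $\mathcal{B}(t):=\big[BL(t),(\tfrac{d}{dt}-A)(BL(t)),\ldots,(\tfrac{d}{dt}-A)^{r-1}(BL(t))\big]\in\mathbb{R}^{n\times rm}$; $\mathcal{C}:=[C^\top,(CA)^\top,\ldots,(CA^{r-1})^\top]^\top\in\mathbb{R}^{rp\times n}$; $\rho:=\operatorname{rk}\mathcal{C}$; $V\in\mathbb{R}^{n\times(n-\rho)}$ any matrix with $\operatorname{im}V=\ker\mathcal{C}$; $\mathcal{N}(t):=V^\dagger[I_n-\mathcal{B}(t)(\mathcal{C}\mathcal{B}(t))^\dagger\mathcal{C}]\in\mathbb{R}^{(n-\rho)\times n}$. *)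

(* Defs.v *)
From HB Require Import structures.
From mathcomp Require Import all_boot all_order all_algebra.
From mathcomp Require Import all_classical all_reals all_analysis.
Set Implicit Arguments. Unset Strict Implicit. Unset Printing Implicit Defensive.
Import Order.TTheory GRing.Theory Num.Theory.
Import numFieldNormedType.Exports.
Local Open Scope ring_scope.
Local Open Scope classical_set_scope.

(** Moore-Penrose conditions for X to be the pseudoinverse of A (real case,
    so conjugate transpose = transpose). *)
Definition is_pinv (R : realType) (a b : nat) (A : 'M[R]_(a, b)) (X : 'M[R]_(b, a)) : Prop :=
  [/\ A *m X *m A = A, X *m A *m X = X,
      (A *m X)^T = A *m X & (X *m A)^T = X *m A].

(** The Moore-Penrose pseudoinverse: the (unique) X satisfying the Penrose
    equations (it always exists over the reals). *)
Definition mx_pinv (R : realType) (a b : nat) (A : 'M[R]_(a, b)) : 'M[R]_(b, a) :=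
  xget 0 [set X | is_pinv A X].

Definition dmA (R : realType) (n k : nat) (A : 'M[R]_n) (M : R -> 'M[R]_(n, k)) :
  R -> 'M[R]_(n, k) := fun t => derive1 M t - A *m M t.

Definition calB (R : realType) (n m r : nat) (A : 'M[R]_n) (B : 'M[R]_(n, m))
  (L : R -> 'M[R]_m) (t : R) : 'M[R]_(n, \sum_(k < r) m) :=
  \mxrow_(k < r) iter k (dmA A) (fun s => B *m L s) t.

Definition calC (R : realType) (n p r : nat) (A : 'M[R]_n) (C : 'M[R]_(p, n)) :
  'M[R]_(\sum_(k < r) p, n) :=
  \mxcol_(k < r) (C *m A ^+ k).

Definition calN (R : realType) (n m p r : nat) (A : 'M[R]_n) (B : 'M[R]_(n, m))
  (C : 'M[R]_(p, n)) (L : R -> 'M[R]_m)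
  (V : 'M[R]_(n, n - \rank (calC r A C))) (t : R) : 'M[R]_(n - \rank (calC r A C), n) :=
  mx_pinv V *m (1%:M - calB r A B L t *m mx_pinv (calC r A C *m calB r A B L t) *m calC r A C).

(* Main.v *)
Require Import Defs.
From HB Require Import structures.
From mathcomp Require Import all_boot all_order all_algebra.
From mathcomp Require Import all_classical all_reals all_analysis.
Import Order.TTheory GRing.Theory Num.Theory.
Import numFieldNormedType.Exports.
Local Open Scope ring_scope.
Local Open Scope classical_set_scope.

From mathcomp Require Import zify.
Set Implicit Arguments. Unset Strict Implicit.

Section LA.
Variable R : realType.
Implicit Types a b k : nat.

Lemma mulmx_tr_eq0 (a b : nat) (X : 'M[R]_(a, b)) : X *m X^T = 0 -> X = 0.
Proof.
move=> H; apply/matrixP => i j; rewrite mxE.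
have := congr1 (fun M : 'M[R]_a => M i i) H; rewrite !mxE => /eqP.
rewrite psumr_eq0; last by move=> l _; rewrite mxE -expr2 sqr_ge0.
move/allP => /(_ j (mem_index_enum _)) /=.
by rewrite mxE -expr2 sqrf_eq0 => /eqP.
Qed.

Lemma rowfree_unit (a b : nat) (X : 'M[R]_(a, b)) : row_free X -> X *m X^T \in unitmx.
Proof.
move=> fX; rewrite -row_free_unit -kermx_eq0.
set K := kermx _.
have HK : K *m (X *m X^T) = 0 by rewrite mulmx_ker.
have : (K *m X) *m (K *m X)^T = 0.
  by rewrite trmx_mul mulmxA -(mulmxA K) HK mul0mx.
move/mulmx_tr_eq0/eqP; rewrite mulmx_free_eq0 //.
Qed.

Lemma pinv_fact (a b k : nat) (F : 'M[R]_(a, k)) (G : 'M[R]_(k, b)) :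
  F^T *m F \in unitmx -> G *m G^T \in unitmx ->
  is_pinv (F *m G) (G^T *m invmx (G *m G^T) *m invmx (F^T *m F) *m F^T).
Proof.
move=> uF uG.
set SG := G *m G^T; set SF := F^T *m F.
have tSG : SG^T = SG by rewrite /SG trmx_mul trmxK.
have tSF : SF^T = SF by rewrite /SF trmx_mul trmxK.
have AX : (F *m G) *m (G^T *m invmx SG *m invmx SF *m F^T) = F *m invmx SF *m F^T.
  rewrite !mulmxA -(mulmxA F G) -/SG (mulmxK uG) //.
have XA : (G^T *m invmx SG *m invmx SF *m F^T) *m (F *m G) = G^T *m invmx SG *m G.
  rewrite !mulmxA -(mulmxA _ F^T F) -/SF -(mulmxA _ (invmx SF)) (mulVmx uF) mulmx1 //.
split.
- rewrite AX !mulmxA -(mulmxA _ F^T F) -/SF -(mulmxA _ (invmx SF)) (mulVmx uF) mulmx1 //.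
- rewrite XA !mulmxA -(mulmxA _ G G^T) -/SG (mulmxK uG) //.
- by rewrite AX !trmx_mul trmxK trmx_inv tSF mulmxA.
- by rewrite XA !trmx_mul trmxK trmx_inv tSG mulmxA.
Qed.

Lemma pinv_exists (a b : nat) (A : 'M[R]_(a, b)) : exists X, is_pinv A X.
Proof.
have uG : row_base A *m (row_base A)^T \in unitmx.
  by apply: rowfree_unit; exact: row_base_free.
have uF : (col_base A)^T *m col_base A \in unitmx.
  have := @rowfree_unit _ _ (col_base A)^T; rewrite trmxK; apply.
  by rewrite /row_free mxrank_tr; have := col_base_full A; rewrite /row_full.
have := pinv_fact uF uG; rewrite mulmx_base => H; eexists; exact: H.
Qed.

Lemma mx_pinvP (a b : nat) (A : 'M[R]_(a, b)) : is_pinv A (mx_pinv A).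
Proof. exact: (xgetPex 0 (pinv_exists A)). Qed.

End LA.

Section AN.
Variable R : realType.
Implicit Types f g : R -> R.

Definition sm f := forall k t, derivable ((derive1n k f)) t 1.
Definition smn (k : nat) f := forall i, (i < k)%N -> forall t, derivable ((derive1n i f)) t 1.

Lemma sm_smn f : sm f <-> forall k, smn k f.
Proof. by split => [H k i _ t|H k t]; [exact: H|exact: (H k.+1)]. Qed.

Lemma smn_le k l f : (l <= k)%N -> smn k f -> smn l f.
Proof. by move=> lk H i il; apply: H; apply: leq_trans lk. Qed.

Lemma smn_der k f t : smn k.+1 f -> derivable f t 1.
Proof. by move=> H; have := H 0%N isT t; rewrite derive1n0. Qed.

Lemma sm_der f t : sm f -> derivable f t 1.
Proof. by move=> H; have := H 0%N t; rewrite derive1n0. Qed.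

Lemma smnS k f : smn k.+1 f -> smn k (derive1 f).
Proof. by move=> H i ik t; rewrite -derive1Sn; apply: H. Qed.

Lemma derive1D f g t : derivable f t 1 -> derivable g t 1 ->
  (derive1 (fun s => f s + g s)) t = (derive1 f) t + (derive1 g) t.
Proof. by move=> df dg; rewrite !derive1E; apply: (deriveD df dg). Qed.

Lemma derivableD' f g t : derivable f t 1 -> derivable g t 1 ->
  derivable (fun s => f s + g s) t 1.
Proof. by move=> df dg; apply: (derivableD df dg). Qed.

Lemma derive1M f g t : derivable f t 1 -> derivable g t 1 ->
  (derive1 (fun s => f s * g s)) t = (derive1 f) t * g t + f t * (derive1 g) t.
Proof.
move=> df dg; rewrite !derive1E; have := deriveM df dg => /= ->.
by rewrite /GRing.scale /= addrC mulrC [_ * 'D_1 g t]mulrC.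
Qed.

Lemma derivableM' f g t : derivable f t 1 -> derivable g t 1 ->
  derivable (fun s => f s * g s) t 1.
Proof. by move=> df dg; apply: (derivableM df dg). Qed.

Lemma derive1nD i f g : smn i f -> smn i g ->
  (derive1n i (fun s => f s + g s)) = fun s => (derive1n i f) s + (derive1n i g) s.
Proof.
elim: i => [|i IH] // hf hg.
rewrite derive1nS IH; [|exact: smn_le hf|exact: smn_le hg].
by apply/funext => t; rewrite derive1D //; [apply: hf|apply: hg].
Qed.

Lemma smn_add k f g : smn k f -> smn k g -> smn k (fun s => f s + g s).
Proof.
move=> hf hg i ik t; rewrite derive1nD; [|exact: smn_le (ltnW ik) hf|exact: smn_le (ltnW ik) hg].
by apply: derivableD'; [apply: hf|apply: hg].
Qed.

Lemma smn_mul k f g : smn k f -> smn k g -> smn k (fun s => f s * g s).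
Proof.
elim: k f g => [|k IH] f g hf hg; first by move=> i.
move=> [_ t|i ik t].
  rewrite derive1n0; apply: derivableM'.
    by have := hf 0%N isT t; rewrite derive1n0.
  by have := hg 0%N isT t; rewrite derive1n0.
rewrite derive1Sn.
have -> : (derive1 (fun s => f s * g s)) = fun s => (derive1 f) s * g s + f s * (derive1 g) s.
  apply/funext => s; rewrite derive1M; [by []|exact: smn_der hf|exact: smn_der hg].
have h1 : smn k (fun s => derive1 f s * g s) := IH _ _ (smnS hf) (smn_le (leqnSn k) hg).
have h2 : smn k (fun s => f s * derive1 g s) := IH _ _ (smn_le (leqnSn k) hf) (smnS hg).
have ik' : (i < k)%N by [].
exact: (smn_add h1 h2 ik').
Qed.

Lemma sm_add f g : sm f -> sm g -> sm (fun s => f s + g s).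
Proof. by move=> /sm_smn hf /sm_smn hg; apply/sm_smn => k; apply: smn_add. Qed.

Lemma sm_mul f g : sm f -> sm g -> sm (fun s => f s * g s).
Proof. by move=> /sm_smn hf /sm_smn hg; apply/sm_smn => k; apply: smn_mul. Qed.

Lemma sm_cst (c : R) : sm (fun _ => c).
Proof.
suff H : forall k, exists c', (derive1n k (fun _ : R => c)) = fun _ => c'.
  by move=> k t; have [c' ->] := H k; apply: derivable_cst.
elim=> [|k [c' IH]]; first by exists c.
exists 0; rewrite derive1nS IH; apply/funext => t; exact: derive1_cst.
Qed.

Lemma sm_D f : sm f -> sm (derive1 f).
Proof. by move=> H k t; rewrite -derive1Sn. Qed.

Lemma sm_opp f : sm f -> sm (fun s => - f s).
Proof.
move=> H; have -> : (fun s => - f s) = fun s => (fun _ => -1) s * f s.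
  by apply/funext => s; rewrite mulN1r.
by apply: sm_mul => //; apply: sm_cst.
Qed.

Lemma sm_sum (I : Type) (s : seq I) (P : pred I) (F : I -> R -> R) :
  (forall i, sm (F i)) -> sm (fun t => \sum_(i <- s | P i) F i t).
Proof.
move=> HF; elim: s => [|a s IH].
  have -> : (fun t => \sum_(i <- [::] | P i) F i t) = fun _ => 0.
    by apply/funext => t; rewrite big_nil.
  exact: sm_cst.
have -> : (fun t => \sum_(i <- a :: s | P i) F i t) =
  fun t => (if P a then F a t else 0) + \sum_(i <- s | P i) F i t.
  by apply/funext => t; rewrite big_cons; case: (P a); rewrite ?add0r.
apply: sm_add => //; case: (P a) => //; exact: sm_cst.
Qed.

Lemma sm_prod (I : Type) (s : seq I) (P : pred I) (F : I -> R -> R) :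
  (forall i, sm (F i)) -> sm (fun t => \prod_(i <- s | P i) F i t).
Proof.
move=> HF; elim: s => [|a s IH].
  have -> : (fun t => \prod_(i <- [::] | P i) F i t) = fun _ => 1.
    by apply/funext => t; rewrite big_nil.
  exact: sm_cst.
have -> : (fun t => \prod_(i <- a :: s | P i) F i t) =
  fun t => (if P a then F a t else 1) * \prod_(i <- s | P i) F i t.
  by apply/funext => t; rewrite big_cons; case: (P a); rewrite ?mul1r.
apply: sm_mul => //; case: (P a) => //; exact: sm_cst.
Qed.

Lemma derivable_sum' (I : Type) (s : seq I) (P : pred I) (F : I -> R -> R) t :
  (forall i, derivable (F i) t 1) -> derivable (fun t => \sum_(i <- s | P i) F i t) t 1.
Proof.
move=> HF; elim: s => [|a s IH].
  have -> : (fun t => \sum_(i <- [::] | P i) F i t) = fun _ => 0.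
    by apply/funext => u; rewrite big_nil.
  exact: derivable_cst.
have -> : (fun t => \sum_(i <- a :: s | P i) F i t) =
  fun t => (if P a then F a t else 0) + \sum_(i <- s | P i) F i t.
  by apply/funext => u; rewrite big_cons; case: (P a); rewrite ?add0r.
apply: derivableD' => //; case: (P a) => //; exact: derivable_cst.
Qed.

Lemma derive1_sum (I : Type) (s : seq I) (P : pred I) (F : I -> R -> R) t :
  (forall i, derivable (F i) t 1) ->
  (derive1 (fun t => \sum_(i <- s | P i) F i t)) t = \sum_(i <- s | P i) (derive1 (F i)) t.
Proof.
move=> HF; elim: s => [|a s IH].
  have -> : (fun t => \sum_(i <- [::] | P i) F i t) = fun _ => 0.
    by apply/funext => u; rewrite big_nil.
  by rewrite big_nil; exact: derive1_cst.
have -> : (fun t => \sum_(i <- a :: s | P i) F i t) =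
  fun t => (if P a then F a t else 0) + \sum_(i <- s | P i) F i t.
  by apply/funext => u; rewrite big_cons; case: (P a); rewrite ?add0r.
rewrite derive1D; last exact: derivable_sum'.
  rewrite IH big_cons; case: (P a) => //.
  by rewrite derive1_cst add0r.
by case: (P a) => //; exact: derivable_cst.
Qed.

Definition msm (a b : nat) (F : R -> 'M[R]_(a, b)) := forall i j, sm (fun t => F t i j).

Lemma msm_derivable a b (F : R -> 'M[R]_(a, b)) t : msm F -> derivable F t 1.
Proof. by move=> H; apply/derivable_mxP => i j; apply: (H i j 0). Qed.

Lemma derive1_mx a b (F : R -> 'M[R]_(a, b)) t : msm F ->
  (derive1 F) t = \matrix_(i, j) (derive1 (fun s => F s i j)) t.
Proof.
move=> H; rewrite derive1E derive_mx; last exact: msm_derivable.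
by apply/matrixP => i j; rewrite !mxE derive1E.
Qed.

Lemma msm_D a b (F : R -> 'M[R]_(a, b)) : msm F -> msm ((derive1 F)).
Proof.
move=> H i j.
have -> : (fun t => (derive1 F) t i j) = (derive1 (fun t => F t i j)).
  by apply/funext => t; rewrite derive1_mx // mxE.
exact/sm_D/H.
Qed.

Lemma msm_cst a b (X : 'M[R]_(a, b)) : msm (fun _ => X).
Proof. by move=> i j; apply: sm_cst. Qed.

Lemma msm_add a b (F G : R -> 'M[R]_(a, b)) : msm F -> msm G -> msm (fun t => F t + G t).
Proof.
move=> hF hG i j.
have -> : (fun t => (F t + G t) i j) = fun t => F t i j + G t i j.
  by apply/funext => t; rewrite mxE.
exact: sm_add.
Qed.

Lemma msm_opp a b (F : R -> 'M[R]_(a, b)) : msm F -> msm (fun t => - F t).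
Proof.
move=> hF i j.
have -> : (fun t => (- F t) i j) = fun t => - F t i j.
  by apply/funext => t; rewrite mxE.
exact: sm_opp.
Qed.

Lemma msm_sub a b (F G : R -> 'M[R]_(a, b)) : msm F -> msm G -> msm (fun t => F t - G t).
Proof. by move=> hF hG; apply: msm_add => //; apply: msm_opp. Qed.

Lemma msm_mul a b c (F : R -> 'M[R]_(a, b)) (G : R -> 'M[R]_(b, c)) :
  msm F -> msm G -> msm (fun t => F t *m G t).
Proof.
move=> hF hG i j.
have -> : (fun t => (F t *m G t) i j) = fun t => \sum_l F t i l * G t l j.
  by apply/funext => t; rewrite mxE.
by apply: sm_sum => l; apply: sm_mul.
Qed.

Lemma msm_scale a b (c : R -> R) (F : R -> 'M[R]_(a, b)) :
  sm c -> msm F -> msm (fun t => c t *: F t).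
Proof.
move=> hc hF i j.
have -> : (fun t => (c t *: F t) i j) = fun t => c t * F t i j.
  by apply/funext => t; rewrite mxE.
exact: (sm_mul hc (hF i j)).
Qed.

Lemma msm_tr a b (F : R -> 'M[R]_(a, b)) : msm F -> msm (fun t => (F t)^T).
Proof.
move=> hF i j.
have -> : (fun t => (F t)^T i j) = fun t => F t j i.
  by apply/funext => t; rewrite mxE.
exact: hF.
Qed.

Lemma sm_det a (F : R -> 'M[R]_a) : msm F -> sm (fun t => \det (F t)).
Proof.
move=> hF; rewrite /determinant.
apply: sm_sum => s; apply: sm_mul; first exact: sm_cst.
by apply: sm_prod => i; apply: hF.
Qed.

Lemma msm_adj a (F : R -> 'M[R]_a) : msm F -> msm (fun t => \adj (F t)).
Proof.
move=> hF i j.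
have -> : (fun t => (\adj (F t)) i j) = fun t => (-1) ^+ (j + i) * \det (row' j (col' i (F t))).
  by apply/funext => t; rewrite mxE.
apply: sm_mul; first exact: sm_cst.
apply: sm_det => k l.
have -> : (fun t => row' j (col' i (F t)) k l) = fun t => F t (lift j k) (lift i l).
  by apply/funext => t; rewrite !mxE.
exact: hF.
Qed.

Lemma d_add a b (F G : R -> 'M[R]_(a, b)) t : msm F -> msm G ->
  (derive1 (fun t => F t + G t)) t = (derive1 F) t + (derive1 G) t.
Proof.
move=> hF hG; rewrite derive1E deriveD; [|exact: msm_derivable|exact: msm_derivable].
by rewrite -!derive1E.
Qed.

Lemma d_sub a b (F G : R -> 'M[R]_(a, b)) t : msm F -> msm G ->
  (derive1 (fun t => F t - G t)) t = (derive1 F) t - (derive1 G) t.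
Proof.
move=> hF hG; rewrite derive1E deriveB; [|exact: msm_derivable|exact: msm_derivable].
by rewrite -!derive1E.
Qed.

Lemma d_cst a b (X : 'M[R]_(a, b)) t : (derive1 (fun _ => X)) t = 0.
Proof. exact: derive1_cst. Qed.

Lemma d_mul a b c (F : R -> 'M[R]_(a, b)) (G : R -> 'M[R]_(b, c)) t :
  msm F -> msm G ->
  (derive1 (fun t => F t *m G t)) t = (derive1 F) t *m G t + F t *m (derive1 G) t.
Proof.
move=> hF hG; rewrite derive1_mx; last exact: msm_mul.
rewrite (derive1_mx _ hF) (derive1_mx _ hG).
apply/matrixP => i j; rewrite !mxE.
have -> : (fun s => (F s *m G s) i j) = fun s => \sum_l F s i l * G s l j.
  by apply/funext => s; rewrite mxE.
rewrite derive1_sum; last by move=> l; apply: derivableM'; [apply: (hF _ _ 0)|apply: (hG _ _ 0)].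
rewrite -big_split /=; apply: eq_bigr => l _.
by rewrite derive1M; [rewrite !mxE|apply: (hF _ _ 0)|apply: (hG _ _ 0)].
Qed.

Lemma d_lmul a b c (X : 'M[R]_(a, b)) (G : R -> 'M[R]_(b, c)) t :
  msm G -> (derive1 (fun t => X *m G t)) t = X *m (derive1 G) t.
Proof.
move=> hG; rewrite (@d_mul _ _ _ (fun _ => X)) //; last exact: msm_cst.
by rewrite d_cst mul0mx add0r.
Qed.

Lemma msm_of_smooth a b (F : R -> 'M[R]_(a, b)) :
  (forall k t, derivable ((derive1n k F)) t 1) -> msm F.
Proof.
move=> H.
have E : forall k i j, (fun t => (derive1n k F) t i j) = (derive1n k (fun t => F t i j)).
  elim=> [|k IH] i j //.
  apply/funext => t; rewrite !derive1nS derive1E derive_mx; last exact: H.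
  by rewrite mxE -derive1E IH.
move=> i j k t; rewrite -E.
by move: (H k t) => /derivable_mxP; apply.
Qed.

Lemma msm_sum a b k (F : 'I_k -> R -> 'M[R]_(a, b)) :
  (forall i, msm (F i)) -> msm (fun t => \sum_(i < k) F i t).
Proof.
move=> H i j.
have -> : (fun t => (\sum_(l < k) F l t) i j) = fun t => \sum_(l < k) F l t i j.
  by apply/funext => t; rewrite summxE.
by apply: sm_sum => l; apply: H.
Qed.

Lemma d_sum a b k (F : 'I_k -> R -> 'M[R]_(a, b)) t :
  (forall i, msm (F i)) ->
  derive1 (fun t => \sum_(i < k) F i t) t = \sum_(i < k) derive1 (F i) t.
Proof.
move=> H; rewrite derive1_mx; last exact: msm_sum.
apply/matrixP => i j; rewrite mxE summxE.
have -> : (fun s => (\sum_(l < k) F l s) i j) = fun s => \sum_(l < k) F l s i j.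
  by apply/funext => s; rewrite summxE.
rewrite derive1_sum; last by move=> l; apply: sm_der; apply: H.
by apply: eq_bigr => l _; rewrite derive1_mx // mxE.
Qed.

End AN.

Section Main.
Variable R : realType.
Variables (n m p r : nat) (A : 'M[R]_n) (B : 'M[R]_(n, m)) (C : 'M[R]_(p, n))
  (L : R -> 'M[R]_m).
Hypothesis hL : msm L.
Hypothesis hr : (0 < r)%N.
Hypothesis hCAB : forall k : nat, (k.+2 <= r)%N -> forall t, C *m A ^+ k *m B *m L t = 0.
Hypothesis hG : forall t, \rank (C *m A ^+ r.-1 *m B *m L t) = p.
Hypothesis hBL : forall t, \rank (B *m L t) = p.

Definition Mn k : R -> 'M[R]_(n, m) := iter k (dmA A) (fun s => B *m L s).

Lemma MnS k t : Mn k.+1 t = derive1 (Mn k) t - A *m Mn k t.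
Proof. by []. Qed.

Lemma Mn_msm k : msm (Mn k).
Proof.
elim: k => [|k IH]; first by apply: msm_mul => //; apply: msm_cst.
have -> : Mn k.+1 = fun t => derive1 (Mn k) t - A *m Mn k t by [].
apply: msm_sub; first exact: msm_D.
by apply: msm_mul => //; apply: msm_cst.
Qed.

Definition Gm t : 'M[R]_(p, m) := C *m A ^+ r.-1 *m B *m L t.

Lemma block k : forall j,
  (((k + j).+2 <= r)%N -> forall t, C *m A ^+ j *m Mn k t = 0) /\
  ((k + j).+1 = r -> forall t, C *m A ^+ j *m Mn k t = (-1) ^+ k *: Gm t).
Proof.
elim: k => [|k IH] j.
  split=> [hj t|hj t]; rewrite /Mn /= mulmxA.
    exact: hCAB.
  by rewrite scale1r /Gm -hj.
have E t : C *m A ^+ j *m Mn k.+1 t =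
    derive1 (fun s => C *m A ^+ j *m Mn k s) t - C *m A ^+ j.+1 *m Mn k t.
  rewrite MnS mulmxBr d_lmul; last exact: Mn_msm.
  have eA : A ^+ j.+1 = A ^+ j *m A by rewrite exprSr mulmxE.
  by rewrite eA !mulmxA.
have Z : ((k + j).+2 <= r)%N -> forall t, derive1 (fun s => C *m A ^+ j *m Mn k s) t = 0.
  move=> hkj t.
  have -> : (fun s => C *m A ^+ j *m Mn k s) = fun _ => 0.
    by apply/funext => s; apply: (IH j).1.
  exact: d_cst.
split=> [hj t|hj t].
  have h1 : ((k + j).+2 <= r)%N by apply: leq_trans hj; rewrite addSn ltnW.
  have h2 : ((k + j.+1).+2 <= r)%N by rewrite addnS -addSn.
  by rewrite E Z // (IH j.+1).1 // subr0.
have h1 : ((k + j).+2 <= r)%N by rewrite -hj addSn.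
have h2 : ((k + j.+1).+1 = r)%N by rewrite addnS -addSn.
rewrite E Z // (IH j.+1).2 // sub0r.
by rewrite exprS mulN1r scaleNr.
Qed.

Definition Nm t : 'M[R]_p := Gm t *m (Gm t)^T.
Definition dd t : R := \det (Nm t).
Definition Qm t : 'M[R]_m := dd t *: 1%:M - (Gm t)^T *m \adj (Nm t) *m Gm t.

Lemma Gm_msm : msm Gm.
Proof. by apply: msm_mul => //; apply: msm_cst. Qed.

Lemma Nm_msm : msm Nm.
Proof. by apply: msm_mul; [exact: Gm_msm|apply: msm_tr; exact: Gm_msm]. Qed.

Lemma Qm_msm : msm Qm.
Proof.
apply: msm_sub.
  by apply: msm_scale; [apply: sm_det; exact: Nm_msm|exact: msm_cst].
apply: msm_mul; last exact: Gm_msm.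
apply: msm_mul; first by apply: msm_tr; exact: Gm_msm.
by apply: msm_adj; exact: Nm_msm.
Qed.

Lemma GQ t : Gm t *m Qm t = 0.
Proof.
have e : Gm t *m (Gm t)^T *m \adj (Nm t) = (dd t)%:M by exact: mul_mx_adj.
rewrite /Qm mulmxBr (mulmxA (Gm t) _ (Gm t)) (mulmxA (Gm t)) e mul_scalar_mx.
by rewrite -scalemxAr mulmx1 subrr.
Qed.

Lemma M0Q t : Mn 0 t *m Qm t = 0.
Proof.
have sub : (Gm t <= B *m L t)%MS.
  by rewrite /Gm -mulmxA submxMl.
have -> : Mn 0 t = B *m L t by [].
have := (mxrank_leqif_sup sub).2; rewrite hG hBL eqxx => /esym/submxP [D ->].
by rewrite -mulmxA GQ mulmx0.
Qed.

Lemma Nm_unit t : Nm t \in unitmx.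
Proof. by apply: rowfree_unit; rewrite /row_free hG. Qed.

Lemma dd_neq0 t : dd t != 0.
Proof. by have := Nm_unit t; rewrite unitmxE unitfE. Qed.

Lemma decomp k : exists Z : nat -> R -> 'M[R]_m, (forall i, msm (Z i)) /\
  forall t, Mn k t *m Qm t = \sum_(i < k) Mn i t *m Z i t.
Proof.
elim: k => [|k [Z [hZ E]]].
  exists (fun _ _ => 0); split; first by move=> i; apply: msm_cst.
  by move=> t; rewrite big_ord0 M0Q.
exists (fun i t => (if i == 0%N then 0 else Z i.-1 t) +
                   (if (i < k)%N then derive1 (Z i) t else - derive1 Qm t)).
split.
  move=> i; apply: msm_add.
    by case: (i == 0%N); [apply: msm_cst|apply: hZ].
  case: (i < k)%N; first by apply: msm_D.
  by apply: msm_opp; apply: msm_D; exact: Qm_msm.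
move=> t.
have EF : (fun t => Mn k t *m Qm t) = (fun t => \sum_(i < k) Mn i t *m Z i t).
  by apply/funext => s; apply: E.
have D := congr1 (fun f => derive1 f t) EF; rewrite /= in D.
rewrite d_mul in D; [|exact: Mn_msm|exact: Qm_msm].
rewrite d_sum in D; last by move=> i; apply: msm_mul; [exact: Mn_msm|exact: hZ].
have D' : derive1 (Mn k) t *m Qm t =
   \sum_(i < k) (derive1 (Mn i) t *m Z i t + Mn i t *m derive1 (Z i) t)
   - Mn k t *m derive1 Qm t.
  have S : \sum_(i < k) derive1 (fun t => Mn i t *m Z i t) t =
     \sum_(i < k) (derive1 (Mn i) t *m Z i t + Mn i t *m derive1 (Z i) t).
    by apply: eq_bigr => i _; rewrite d_mul //; (exact: Mn_msm || exact: hZ).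
  by rewrite -S -D addrK.
rewrite MnS mulmxBl D' -mulmxA E mulmx_sumr big_split /=.
under [in RHS]eq_bigr => i _ do rewrite mulmxDr.
rewrite big_split /= big_ord_recl big_ord_recr /= ?eqxx ?mulmx0 ?add0r ?ltnn.
have e1 : forall i : 'I_k, dmA A (Mn (0 + i)) t *m Z (0 + i)%N t =
    derive1 (Mn i) t *m Z i t - A *m (Mn i t *m Z i t).
  by move=> i; rewrite add0n /dmA mulmxBl mulmxA.
under [X in _ = X + _]eq_bigr => i _ do rewrite e1.
under [X in _ = _ + (X + _)]eq_bigr => i _ do rewrite ltn_ord.
rewrite sumrB mulmxN.

rewrite addrACA -!addrA; congr (_ + (_ + _)).
by rewrite addrC.
Qed.

Definition inSpan t c (X : 'M[R]_(n, c)) :=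
  exists U : nat -> 'M[R]_(p, c), X = \sum_(i < r) Mn i t *m (Gm t)^T *m U i.

Lemma inSpan0 t c : inSpan t (0 : 'M[R]_(n, c)).
Proof. by exists (fun _ => 0); rewrite big1 // => i _; rewrite mulmx0. Qed.

Lemma inSpanD t c (X Y : 'M[R]_(n, c)) : inSpan t X -> inSpan t Y -> inSpan t (X + Y).
Proof.
move=> [U1 ->] [U2 ->]; exists (fun i => U1 i + U2 i).
by rewrite -big_split; apply: eq_bigr => i _; rewrite mulmxDr.
Qed.

Lemma inSpanZ t c a (X : 'M[R]_(n, c)) : inSpan t X -> inSpan t (a *: X).
Proof.
move=> [U1 ->]; exists (fun i => a *: U1 i).
by rewrite scaler_sumr; apply: eq_bigr => i _; rewrite scalemxAr.
Qed.

Lemma inSpan_sum t c k (F : 'I_k -> 'M[R]_(n, c)) :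
  (forall i, inSpan t (F i)) -> inSpan t (\sum_(i < k) F i).
Proof.
move=> H; apply: (big_ind (@inSpan t c)); first exact: inSpan0.
  by move=> x y; apply: inSpanD.
by move=> i _; apply: H.
Qed.

Lemma inSpan1 t c k (X : 'M[R]_(p, c)) : (k < r)%N -> inSpan t (Mn k t *m (Gm t)^T *m X).
Proof.
move=> hk; exists (fun i => if i == k then X else 0).
rewrite (bigD1 (Ordinal hk)) //= eqxx big1 ?addr0 //.
move=> i hi; have -> : (nat_of_ord i == k) = false.
  by apply/negbTE; apply: contra hi => /eqP e; apply/eqP/val_inj.
by rewrite mulmx0.
Qed.

Lemma span_Mn t k : (k < r)%N -> forall c (W : 'M[R]_(m, c)), inSpan t (Mn k t *m W).
Proof.
elim/ltn_ind: k => k IH hk c W.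
have [Z [hZ E]] := decomp k.
have eM : Mn k t = (dd t)^-1 *: (Mn k t *m (Gm t)^T *m (\adj (Nm t) *m Gm t)
                     + \sum_(i < k) Mn i t *m Z i t).
  rewrite -E /Qm mulmxBr -scalemxAr mulmx1.
  have ea : Mn k t *m ((Gm t)^T *m \adj (Nm t) *m Gm t) =
            Mn k t *m (Gm t)^T *m (\adj (Nm t) *m Gm t) by rewrite !mulmxA.
  by rewrite ea addrC subrK scalerA mulVf ?dd_neq0 ?scale1r.
rewrite eM -scalemxAl; apply: inSpanZ.
rewrite mulmxDl; apply: inSpanD.
  by rewrite -mulmxA; apply: inSpan1.
rewrite mulmx_suml; apply: inSpan_sum => i.
rewrite -mulmxA; apply: IH => //.
by apply: ltn_trans hk.
Qed.

Lemma ker_incl t c (V : 'M[R]_(\sum_(k < r) m, c)) :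
  calC r A C *m calB r A B L t *m V = 0 -> calB r A B L t *m V = 0.
Proof.
have eB : calB r A B L t *m V = \sum_(k < r) Mn k t *m submxcol V k.
  by rewrite -{1}(submxcolK V) /calB mul_mxrow_mxcol.
have [U eU] : inSpan t (calB r A B L t *m V).
  by rewrite eB; apply: inSpan_sum => k; apply: span_Mn.
rewrite -mulmxA eU => H0.
have hj : forall j : 'I_r, C *m A ^+ j *m (\sum_(i < r) Mn i t *m (Gm t)^T *m U i) = 0.
  move=> j; have := congr1 (fun M => submxcol M j) H0.
  by rewrite /calC mxcol_mul mxcolK submxcol0.
have claim : forall j, (j < r)%N -> U (r.-1 - j)%N = 0.
  elim/ltn_ind => j IH hjr.
  have i0r : (r.-1 - j < r)%N by lia.
  have := hj (Ordinal hjr); rewrite mulmx_sumr (bigD1 (Ordinal i0r)) //= big1.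
    rewrite addr0 !mulmxA (block (r.-1 - j) j).2; last by lia.
    rewrite -scalemxAl -scalemxAl -/(Nm t) => /eqP; rewrite scaler_eq0 signr_eq0 /=.
    move/eqP => e; have := congr1 (mulmx (invmx (Nm t))) e.
    by rewrite mulKmx ?Nm_unit // mulmx0.
  move=> i hi.
  have hi' : nat_of_ord i != (r.-1 - j)%N.
    by apply: contra hi => /eqP e; apply/eqP/val_inj.
  case: (ltngtP i (r.-1 - j)) => [lt|gt|eq]; last by rewrite eq eqxx in hi'.
    by rewrite !mulmxA (block i j).1 ?mul0mx //; lia.
  have -> : U i = 0.
    have := IH (r.-1 - i)%N; have -> : (r.-1 - (r.-1 - i) = i)%N by have := ltn_ord i; lia.
    by have := ltn_ord i; move=> ?; apply; lia.
  by rewrite !mulmx0.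
rewrite big1 // => i _.
have := claim (r.-1 - i)%N; have -> : (r.-1 - (r.-1 - i) = i)%N by have := ltn_ord i; lia.
by move=> ->; [rewrite mulmx0|lia].
Qed.

End Main.


Unset Implicit Arguments. Set Strict Implicit.

Theorem lemma3 (R : realType) (n m p : nat) (hmp : (p <= m)%N)
  (A : 'M[R]_n) (B : 'M[R]_(n, m)) (C : 'M[R]_(p, n))
  (f : R -> 'cV[R]_n -> 'cV[R]_m -> 'cV[R]_n)
  (f_cont : continuous (fun z : R * 'cV[R]_n * 'cV[R]_m => f z.1.1 z.1.2 z.2))
  (f_bnd : exists M : R, forall t x u, `|f t x u| <= M)
  (L : R -> 'M[R]_m)
  (* (P1) *)
  (L_smooth : forall (k : nat) (t : R), derivable (derive1n k L) t 1)
  (L_bnd : forall k : nat, (k <= n)%N -> exists M : R, forall t, `|derive1n k L t| <= M)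
  (q : nat) (hq : forall t, \rank (B *m L t) = q) (hpq : (p <= q)%N)
  (* (P2) *)
  (r : nat) (hr : (0 < r)%N)
  (hCAB : forall k : nat, (k.+2 <= r)%N -> forall t, C *m A ^+ k *m B *m L t = 0)
  (hCAf : forall k : nat, (k.+2 <= r)%N -> forall t x u, C *m A ^+ k *m f t x u = 0)
  (hGamma : forall t, \rank (C *m A ^+ r.-1 *m B *m L t) = p)
  (* moreover *)
  (hqp : q = p) :
  (forall t : R,
     (1%:M - calB r A B L t *m mx_pinv (calC r A C *m calB r A B L t) *m calC r A C)
       *m calB r A B L t = 0)
  /\
  (forall V : 'M[R]_(n, n - \rank (calC r A C)),
     (* im V = ker calC, expressed through row spaces of transposes *)
     (V^T == kermx (calC r A C)^T)%MS ->
     forall t : R, calN B L V t *m calB r A B L t = 0).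
Proof.
have hL : msm L := msm_of_smooth L_smooth.
have hBL : forall t, \rank (B *m L t) = p by move=> t; rewrite hq hqp.
have H1 : forall t : R,
     (1%:M - calB r A B L t *m mx_pinv (calC r A C *m calB r A B L t) *m calC r A C)
       *m calB r A B L t = 0.
  move=> t.
  set CB := calC r A C *m calB r A B L t.
  have : (calB r A B L t <= CB)%MS.
    rewrite submxE; apply/eqP; apply: (ker_incl hL hr hCAB hGamma hBL).
    by rewrite mulmx_coker.
  case/submxP => D eD.
  have [P1 _ _ _] := mx_pinvP CB.
  rewrite mulmxBl mul1mx -(mulmxA _ (calC r A C)) -/CB.
  have e2 : calB r A B L t *m mx_pinv CB *m CB = D *m (CB *m mx_pinv CB *m CB).
    by rewrite eD !mulmxA.
  by rewrite e2 P1 -eD subrr.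
split => // V _ t.
by rewrite /calN -mulmxA H1 mulmx0.
Qed.
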